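(* Let $U$ be a finite set and $\mathscr{S}$ a collection of subsets of $U$ of size at most $k$ that is closed under taking subsets. Suppose $\mathscr{C}$ and $\mathscr{C}'$ are $k$-set covers of $U$ (partitions of $U$ into members of $\mathscr{S}$), where $\mathscr{C}$ consists of $b$ sets of which $b_1$ are 1-element sets, and $\mathscr{C}'$ consists of $b'$ sets of which $b_1'$ are 1-element sets. Then there exists a $k$-set cover $\mathscr{C}''$ of $U$ (a partition of $U$ into members of $\mathscr{S}$) with $\min(b,b')$ sets and $\min(b_1,b_1')$ 1-element sets. *)

(* Defs.v *)
From mathcomp Require Import all_boot.
Set Implicit Arguments. Unset Strict Implicit. Unset Printing Implicit Defensive.

Definition set_cover (T : finType) (S : {set {set T}}) (U : {set T})
  (P : {set {set T}}) : Prop :=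
  partition P U /\ P \subset S.

Definition nsingletons (T : finType) (P : {set {set T}}) : nat :=
  #|[set A in P | #|A| == 1]|.

(* Main.v *)
Require Import Defs.
From mathcomp Require Import all_boot.
From mathcomp Require Import zify.
Set Implicit Arguments. Unset Strict Implicit. Unset Printing Implicit Defensive.

Section Aux.
Variable T : finType.
Implicit Types (P D N : {set {set T}}).

Lemma disjP (A B : {set T}) : (forall x, x \in A -> x \in B -> False) -> [disjoint A & B].
Proof.
move=> h; rewrite -setI_eq0; apply/eqP/setP => x; rewrite !inE.
by apply/negbTE/negP => /andP[]; apply: h.
Qed.

Lemma nsingE P : nsingletons P = #|P :&: [set X : {set T} | #|X| == 1]|.
Proof. by rewrite /nsingletons setIdE. Qed.

Lemma cardsU_disj (A B : {set {set T}}) : A :&: B = set0 -> #|A :|: B| = #|A| + #|B|.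
Proof. by move=> h; rewrite cardsU h cards0 subn0. Qed.

Lemma nsingU P D : P :&: D = set0 -> nsingletons (P :|: D) = nsingletons P + nsingletons D.
Proof.
move=> h; rewrite !nsingE setIUl cardsU_disj //.
apply/setP=> X; move/setP: h => /(_ X); rewrite !inE.
by case: (X \in P); case: (X \in D); case: (#|X| == 1).
Qed.

Lemma nsing_le P : nsingletons P <= #|P|.
Proof. by rewrite nsingE subset_leq_card // subsetIl. Qed.

Lemma coverU P D : cover (P :|: D) = cover P :|: cover D.
Proof. exact: bigcup_setU. Qed.

Lemma cover2 (X Y : {set T}) : cover [set X; Y] = X :|: Y.
Proof. by rewrite coverU !cover1. Qed.

Lemma trivIset2 (X Y : {set T}) : [disjoint X & Y] -> trivIset [set X; Y].
Proof.
move=> d; apply/trivIsetP => A B; rewrite !inE => /orP[]/eqP-> /orP[]/eqP->;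
  rewrite ?eqxx // => _; by rewrite // disjoint_sym.
Qed.

Lemma replace P (U : {set T}) D N : partition P U -> D \subset P -> set0 \notin N ->
  trivIset N -> cover N = cover D ->
  [/\ partition ((P :\: D) :|: N) U,
      #|(P :\: D) :|: N| + #|D| = #|P| + #|N| &
      nsingletons ((P :\: D) :|: N) + nsingletons D = nsingletons P + nsingletons N].
Proof.
move=> hP sDP n0 tN cN.
have tP := partition_trivIset hP.
have dX : forall X, X \in P :\: D -> [disjoint X & cover D].
  move=> X /setDP[XP XD]; apply/bigcup_disjointP => Y YD.
  move/trivIsetP: tP => tP; apply: tP => //; first exact: (subsetP sDP).
  by apply: contraNneq XD => ->.
have dPN : (P :\: D) :&: N = set0.
  apply/setP=> X; rewrite inE in_set0; apply/negbTE/negP => /andP[XPD XN].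
  have := dX _ XPD; rewrite -cN => dXc.
  have sX : X \subset cover N by apply: bigcup_sup XN.
  move: dXc; rewrite -setI_eq0 (setIidPl sX) => /eqP X0.
  by move: n0; rewrite -X0 XN.
have dPD : (P :\: D) :&: D = set0.
  by apply/setP=> X; rewrite !inE; case: (X \in D); rewrite ?andbF.
have ePD : (P :\: D) :|: D = P.
  apply/setP => X; rewrite !inE; case: (boolP (X \in D)) => XD /=;
  by rewrite ?orbF ?orbT ?(subsetP sDP _ XD).
have covP := cover_partition hP.
split.
- apply/and3P; split.
  + by rewrite coverU cN -coverU ePD covP.
  + apply: trivIsetU => //; first exact: trivIsetD.
    rewrite cN disjoint_sym; apply/bigcup_disjointP => X XPD.
    by rewrite disjoint_sym; apply: dX.
  + by rewrite !inE (partition0 hP) andbF /=.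
- by rewrite cardsU_disj // addnAC -cardsU_disj // ePD.
- by rewrite nsingU // addnAC -nsingU // ePD.
Qed.

End Aux.

Lemma ar1 a d p n : a + d = p + n -> d <= 1 -> p <= a.+1.
Proof. lia. Qed.

Lemma ar2 a p1 p : p1 + 1 = p + 2 -> a + 2 = p1 + 1 -> a = p.
Proof. lia. Qed.

Lemma ar3 p p1 p2 dA n1 d2 n2 : p1 + dA = p + n1 -> p2 + d2 = p1 + n2 ->
  dA = 0 -> 1 <= n1 -> d2 <= 2 -> p <= p2.+1.
Proof. lia. Qed.

Section Proc.
Variables (T : finType) (U : {set T}) (S Cp : {set {set T}}).
Hypothesis HSdown : forall A B : {set T}, A \in S -> B \subset A -> B \in S.
Hypothesis HCp : set_cover S U Cp.
Variable b : nat.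
Hypothesis hb : b < #|Cp|.

Definition Inv (P : {set {set T}}) (L : {set T}) :=
  partition P U /\ forall A, A \in P -> (A \subset L /\ A \in S) \/
     ([disjoint A & L] /\ exists2 B, B \in Cp & A \subset B).

Lemma inv_S P L : Inv P L -> P \subset S.
Proof.
case=> _ hI; apply/subsetP => A AP; case: (hI A AP) => [[]|[_ [B BC AB]]] //.
by apply: HSdown AB; apply: (subsetP HCp.2).
Qed.

Lemma count_ref P : partition P U ->
  (forall X, X \in P -> exists2 B, B \in Cp & X \subset B) -> #|Cp| <= #|P|.
Proof.
move=> hP hX.
have [pCp _] := HCp.
have tCp := partition_trivIset pCp.
have hi : #|[set (if [pick y in X] is Some y then pblock Cp y else set0) | X : {set T} in P]| <= #|P| := leq_imset_card _ _.
apply: leq_trans hi.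
apply: subset_leq_card; apply/subsetP => B BCp.
have [x xB] := set0Pn _ (partition_neq0 pCp BCp).
have xU : x \in U := subsetP (partitionS pCp BCp) x xB.
have XP : pblock P x \in P by rewrite pblock_mem // (cover_partition hP).
have xX : x \in pblock P x by rewrite mem_pblock (cover_partition hP).
apply/imsetP; exists (pblock P x) => //.
have [B2 B2C XB2] := hX _ XP.
case: pickP => [y yX | /(_ x)]; last by rewrite xX.
rewrite (def_pblock tCp B2C (subsetP XB2 _ yX)).
by rewrite -(def_pblock tCp B2C (subsetP XB2 _ xX)) (def_pblock tCp BCp xB).
Qed.

Lemma step P L : Inv P L -> #|P| = b -> nsingletons Cp < nsingletons P ->
  exists P' (L' : {set T}), [/\ #|L'| < #|L|, Inv P' L', #|P'| = b &
                    nsingletons P <= (nsingletons P').+1].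
Proof.
move=> [hP hI] hPb hc.
have tP := partition_trivIset hP.
have covP := cover_partition hP.
have [pCp sCp] := HCp.
have tCp := partition_trivIset pCp.
have covCp := cover_partition pCp.
have inU : forall X x, X \in P -> x \in X -> x \in U.
  by move=> X x XP xX; rewrite -covP; apply/bigcupP; exists X.
have BCp : forall x, x \in U -> pblock Cp x \in Cp /\ x \in pblock Cp x.
  by move=> x xU; rewrite pblock_mem ?mem_pblock covCp.
have left_of : forall X x, X \in P -> x \in X -> x \in L -> X \subset L /\ X \in S.
  move=> X x XP xX xL; case: (hI X XP) => // [[d _]].
  by rewrite (disjointFr d xX) in xL.
have right_of : forall X x, X \in P -> x \in X -> x \notin L ->
    [disjoint X & L] /\ exists2 B, B \in Cp & X \subset B.
  move=> X x XP xX xL; case: (hI X XP) => // [[sXL _]].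
  by rewrite (subsetP sXL x xX) in xL.
have uniqP : forall X Y x, X \in P -> Y \in P -> x \in X -> x \in Y -> X = Y.
  by move=> X Y x XP YP xX xY; rewrite -(def_pblock tP XP xX) (def_pblock tP YP xY).
have uniqC : forall X Y x, X \in Cp -> Y \in Cp -> x \in X -> x \in Y -> X = Y.
  by move=> X Y x XP YP xX xY; rewrite -(def_pblock tCp XP xX) (def_pblock tCp YP xY).
have keep : forall X A u, X \in P -> A \in P -> u \in A -> X != A ->
    (X \subset L :\ u /\ X \in S) \/
    ([disjoint X & L :\ u] /\ exists2 B, B \in Cp & X \subset B).
  move=> X A u XP AP uA XA.
  have uX : u \notin X by apply: contra XA => uX; apply/eqP; apply: uniqP XP AP uX uA.
  case: (hI X XP) => [[XL XS]|[d hB]].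
    left; split=> //; apply/subsetP => y yX; rewrite !inE (subsetP XL) // andbT.
    by apply: contraNneq uX => yu; rewrite -yu.
  right; split=> //; apply: disjointWr d; exact: subD1set.
case: (boolP [exists A in P, (A \subset L) && (#|A| == 1)]) =>
   [/exists_inP [A AP /andP [AL /cards1P [u Au]]] | nc1].
  rewrite Au in AP AL.
  have uL : u \in L by rewrite (subsetP AL) ?set11.
  exists P, (L :\ u); split => //.
  - by rewrite (cardsD1 u L) uL.
  - split=> // X XP; case: (boolP (X == [set u])) => [/eqP -> | XA].
      right; split; first by rewrite disjoints1 !inE eqxx.
      have [h1 h2] := BCp u (inU _ _ AP (set11 u)).
      by exists (pblock Cp u); rewrite ?sub1set.
    exact: keep XP AP (set11 u) XA.
case: (boolP [exists A in P, exists u in A, exists R in P, exists B in Cp,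
   [&& A \subset L, 1 < #|A|, [disjoint R & L], R \subset B & u \in B]]) => [|nc2].
  case/exists_inP => A AP /exists_inP [u uA /exists_inP [R RP
     /exists_inP [B BC /and5P [AL A2 dRL RB uB]]]].
  have uL : u \in L := subsetP AL u uA.
  have AS : A \in S := (left_of A u AP uA uL).2.
  have uR : u \notin R by rewrite (disjointFl dRL uL).
  have AR : A != R by apply: contraNneq uR => <-.
  have dAR : [disjoint A & R].
    by move/trivIsetP: tP => tP'; apply: tP'.
  have sDP : [set A; R] \subset P by apply/subsetP => X; rewrite !inE => /orP[]/eqP->.
  have A1 : 0 < #|A :\ u| by move: A2; rewrite (cardsD1 u A) uA.
  have n0 : set0 \notin [set A :\ u; u |: R].
    rewrite !inE negb_or eq_sym -card_gt0 A1 /= eq_sym.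
    by apply/set0Pn; exists u; rewrite setU11.
  have tN : trivIset [set A :\ u; u |: R].
    apply: trivIset2; apply: disjP => x; rewrite !inE => /andP[xu xA] /orP[/eqP xeq|xR].
      by rewrite xeq eqxx in xu.
    by rewrite (disjointFr dAR xA) in xR.
  have cNe : cover [set A :\ u; u |: R] = cover [set A; R].
    rewrite !cover2; apply/setP => x; rewrite !inE.
    by case: (eqVneq x u) => [->|xu]; rewrite ?uA ?orbT //=.
  have [pP' cP' nP'] := replace hP sDP n0 tN cNe.
  have NN : A :\ u != u |: R.
    by apply/eqP => e; have := setU11 u R; rewrite -e !inE eqxx.
  move: cP'; rewrite !cards2 AR NN => cP'.
  have nD : nsingletons [set A; R] <= 1.
    rewrite nsingE; apply: (@leq_trans #|[set R]|); last by rewrite cards1.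
    apply: subset_leq_card; apply/subsetP => X.
    rewrite !inE => /andP[/orP[/eqP->|/eqP->] X1] //.
    by rewrite (gtn_eqF A2) in X1.
  exists ((P :\: [set A; R]) :|: [set A :\ u; u |: R]), (L :\ u); split.
  - by rewrite (cardsD1 u L) uL.
  - split=> // X; rewrite !inE => /orP[/andP[XD XP] | /orP[/eqP-> | /eqP->]].
    + by apply: keep XP AP uA _; apply: contra XD => ->.
    + left; split; last exact: HSdown AS (subD1set A u).
      by apply/subsetP => y; rewrite !inE => /andP[-> /(subsetP AL) ->].
    + right; split.
        apply: disjP => x; rewrite !inE => /orP[/eqP->|xR]; first by rewrite eqxx.
        by rewrite (disjointFr dRL xR) andbF.
      by exists B => //; rewrite subUset sub1set uB RB.
  - by rewrite -hPb; apply: addIn cP'.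
  - exact: ar1 nP' nD.
case: (boolP [exists R in P, [disjoint R & L] && (R \notin Cp)]) => [|nc3]; last first.
  exfalso; move: hc; apply/negP; rewrite -leqNgt !nsingE.
  apply: subset_leq_card; apply/subsetP => X; rewrite !inE => /andP[XP X1].
  rewrite X1 andbT; move/cards1P: (X1) => [x Xx].
  have xX : x \in X by rewrite Xx set11.
  case: (boolP (x \in L)) => xL.
    have [XL _] := left_of X x XP xX xL.
    exfalso; apply: (negP nc1); apply/exists_inP; exists X => //; by rewrite XL X1.
  have [d _] := right_of X x XP xX xL.
  apply/negPn/negP => XnC; apply: (negP nc3); apply/exists_inP; exists X => //.
  by rewrite d XnC.
case/exists_inP => R RP /andP[dRL RnC].
have [w wR] := set0Pn _ (partition_neq0 hP RP).
have wL : w \notin L by rewrite (disjointFr dRL wR).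
have [_ [B BC RB]] := right_of R w RP wR wL.
have [v vB vR] : exists2 v, v \in B & v \notin R.
  case: (boolP [exists v in B, v \notin R]) => [/exists_inP[v ? ?]|nv]; first by exists v.
  exfalso; move: RnC; have -> : R = B; last by rewrite BC.
  apply/eqP; rewrite eqEsubset RB; apply/subsetP => y yB; apply/negPn/negP => yR.
  by apply: (negP nv); apply/exists_inP; exists y.
have vU : v \in U := subsetP (partitionS pCp BC) v vB.
have A2P : pblock P v \in P by rewrite pblock_mem ?covP.
have vA2 : v \in pblock P v by rewrite mem_pblock covP.
set A2 := pblock P v in A2P vA2.
have A2gt0 : 0 < #|A2| by apply/card_gt0P; exists v.
case: (boolP (v \in L)) => vL.
  exfalso; have [A2L _] := left_of A2 v A2P vA2 vL.
  case: (boolP (#|A2| == 1)) => h1.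
    by apply: (negP nc1); apply/exists_inP; exists A2 => //; rewrite A2L h1.
  have h2 : 1 < #|A2| by rewrite ltn_neqAle eq_sym h1.
  apply: (negP nc2); apply/exists_inP; exists A2 => //; apply/exists_inP; exists v => //.
  apply/exists_inP; exists R => //; apply/exists_inP; exists B => //.
  by rewrite A2L h2 dRL RB vB.
have [dA2L [B2 B2C A2B2]] := right_of A2 v A2P vA2 vL.
have eB : B2 = B := uniqC B2 B v B2C BC (subsetP A2B2 v vA2) vB.
rewrite eB in A2B2.
have A2R : A2 != R by apply: contraNneq vR => <-.
case: (boolP [exists A in P, exists u in A, u \in L]) => [|nL]; last first.
  exfalso; have := count_ref hP.
  have hX : forall X, X \in P -> exists2 B, B \in Cp & X \subset B.
    move=> X XP; have [x xX] := set0Pn _ (partition_neq0 hP XP).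
    have xL : x \notin L.
      by apply/negP => xL; apply: (negP nL); apply/exists_inP; exists X => //; apply/exists_inP; exists x.
    exact: (right_of X x XP xX xL).2.
  move=> /(_ hX); rewrite hPb; apply/negP; rewrite -ltnNge; exact: hb.
case/exists_inP => A AP /exists_inP[u uA uL].
have [AL AS] := left_of A u AP uA uL.
have A2' : 1 < #|A|.
  rewrite ltn_neqAle; apply/andP; split; last by apply/card_gt0P; exists u.
  apply/negP => /eqP h1; apply: (negP nc1); apply/exists_inP; exists A => //.
  by rewrite AL -h1.
have uR : u \notin R by rewrite (disjointFl dRL uL).
have uA2 : u \notin A2 by rewrite (disjointFl dA2L uL).
have AR : A != R by apply: contraNneq uR => <-.
have AA2 : A != A2 by apply: contraNneq uA2 => <-.
have A1 : 0 < #|A :\ u| by move: A2'; rewrite (cardsD1 u A) uA.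
have sD1 : [set A] \subset P by rewrite sub1set.
have n01 : set0 \notin [set A :\ u; [set u]].
  rewrite !inE negb_or eq_sym -card_gt0 A1 /= eq_sym.
  by apply/set0Pn; exists u; rewrite set11.
have tN1 : trivIset [set A :\ u; [set u]].
  by apply: trivIset2; rewrite disjoint_sym disjoints1 !inE eqxx.
have cN1 : cover [set A :\ u; [set u]] = cover [set A].
  by rewrite cover2 cover1 setUC setD1K.
have [pP1 cP1 nP1] := replace hP sD1 n01 tN1 cN1.
set P1 := (P :\: [set A]) :|: [set A :\ u; [set u]] in pP1 cP1 nP1.
have RP1 : R \in P1 by rewrite !inE RP eq_sym AR.
have A2P1 : A2 \in P1 by rewrite !inE A2P eq_sym AA2.
have sD2 : [set R; A2] \subset P1.
  by rewrite subUset !sub1set RP1 A2P1.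
have n02 : set0 \notin [set R :|: A2].
  by rewrite inE eq_sym; apply/set0Pn; exists w; rewrite inE wR.
have cN2 : cover [set R :|: A2] = cover [set R; A2] by rewrite cover1 cover2.
have [pP2 cP2 nP2] := replace pP1 sD2 n02 (trivIset1 _) cN2.
have NN1 : A :\ u != [set u].
  by apply/eqP => e; have := set11 u; rewrite -e !inE eqxx.
move: cP1 cP2; rewrite !cards2 !cards1 NN1 eq_sym A2R /= => cP1 cP2.
have nA : nsingletons [set A] = 0.
  rewrite nsingE; apply/eqP; rewrite cards_eq0; apply/eqP/setP => X.
  rewrite !inE; case: eqP => // ->; by rewrite (gtn_eqF A2').
have nN1 : 1 <= nsingletons [set A :\ u; [set u]].
  rewrite nsingE; apply: (@leq_trans #|[set [set u]]|); first by rewrite cards1.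
  apply: subset_leq_card; apply/subsetP => X; rewrite !inE => /eqP->.
  by rewrite eqxx orbT cards1.
have nD2 : nsingletons [set R; A2] <= 2.
  by apply: leq_trans (nsing_le _) _; rewrite cards2 ltnS leq_b1.
exists ((P1 :\: [set R; A2]) :|: [set R :|: A2]), (L :\ u); split.
- by rewrite (cardsD1 u L) uL.
- split=> // X; rewrite !inE => /orP[/andP[XD /orP[/andP[XA XP]|/orP[/eqP->|/eqP->]]]|/eqP->].
  + by apply: keep XP AP uA _.
  + left; split; last exact: HSdown AS (subD1set A u).
    by apply/subsetP => y; rewrite !inE => /andP[-> /(subsetP AL) ->].
  + right; split; first by rewrite disjoints1 !inE eqxx.
    have [h1 h2] := BCp u (inU _ _ AP uA).
    by exists (pblock Cp u); rewrite ?sub1set.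
  + right; split.
      apply: disjP => x; rewrite !inE => /orP[xR|xA2].
        by rewrite (disjointFr dRL xR) andbF.
      by rewrite (disjointFr dA2L xA2) andbF.
    by exists B => //; rewrite subUset RB A2B2.
- by rewrite -hPb; apply: ar2 cP1 cP2.
- exact: ar3 nP1 nP2 nA nN1 nD2.
Qed.


Lemma process m P (L : {set T}) : #|L| <= m -> Inv P L -> #|P| = b -> nsingletons Cp <= nsingletons P ->
  exists P'', [/\ set_cover S U P'', #|P''| = b & nsingletons P'' = nsingletons Cp].
Proof.
elim: m P L => [|m IH] P L hL hI hPb hc.
all: case: (eqVneq (nsingletons P) (nsingletons Cp)) => [e|ne];
  first by exists P; split=> //; split; [exact: hI.1 | exact: inv_S hI].
all: have hc' : nsingletons Cp < nsingletons P by rewrite ltn_neqAle eq_sym ne hc.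
all: have [P' [L' [hL' hI' hP' hn]]] := step hI hPb hc'.
- by move: (leq_trans hL' hL).
- apply: (IH P' L') => //; first by rewrite -ltnS (leq_trans hL' hL).
  by rewrite -ltnS (leq_trans hc' hn).
Qed.

End Proc.

Lemma main_le (T : finType) (U : {set T}) (S : {set {set T}})
  (HSdown : forall A B : {set T}, A \in S -> B \subset A -> B \in S)
  (C C' : {set {set T}}) : set_cover S U C -> set_cover S U C' -> #|C| <= #|C'| ->
  exists C'', [/\ set_cover S U C'', #|C''| = #|C| &
                  nsingletons C'' = minn (nsingletons C) (nsingletons C')].
Proof.
move=> hC hC' hle.
case: (leqP (nsingletons C) (nsingletons C')) => hn.
  by exists C.
case: (eqVneq #|C| #|C'|) => [e|ne]; first by exists C'; rewrite e.
have hb : #|C| < #|C'| by rewrite ltn_neqAle ne hle.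
apply: (process HSdown hC' hb (m := #|U|) (L := U)) => //; last exact: ltnW.
case: hC => hC1 hC2; split; first exact: hC1.
move=> A AinC; left; split; first exact: partitionS hC1 AinC.
exact: (subsetP hC2).
Qed.

Theorem lemma2 (T : finType) (U : {set T}) (k : nat) (S : {set {set T}})
  (HSU : forall A, A \in S -> A \subset U)
  (HSk : forall A, A \in S -> #|A| <= k)
  (HSdown : forall A B : {set T}, A \in S -> B \subset A -> B \in S)
  (C C' : {set {set T}})
  (HC : set_cover S U C) (HC' : set_cover S U C') :
  exists C'' : {set {set T}},
    [/\ set_cover S U C'',
        #|C''| = minn #|C| #|C'| &
        nsingletons C'' = minn (nsingletons C) (nsingletons C')].
Proof.
case: (leqP #|C| #|C'|) => h.
  have [C'' [h1 h2 h3]] := main_le HSdown HC HC' h.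
  by exists C''; rewrite h2.
have [C'' [h1 h2 h3]] := main_le HSdown HC' HC (ltnW h).
by exists C''; rewrite h2 h3 minnC.
Qed.
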